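(* Let $p,m,n\ge 1$ and $M>1$ be integers, let $N$ be the number of workers, and let $\mathbb{F}$ be a sufficiently large finite field. For fully private coded matrix multiplication (as described in the context) there exist linear coding schemes that achieve a recovery threshold of $2R(p,m,n)+1$.
   Context: Fully private coded matrix multiplication: given lists $\boldsymbol{A}=(A^{(1)},\dots,A^{(M)})$ with $A^{(\ell)}\in\mathbb{F}^{s\times t}$ and $\boldsymbol{B}=(B^{(1)},\dots,B^{(M)})$ with $B^{(\ell)}\in\mathbb{F}^{s\times r}$, and an index $D\in[M]$, the master wants ${A^{(D)}}^\intercal B^{(D)}$. Assume $p\mid s$, $m\mid t$, $n\mid r$; each $A^{(\ell)}$ is partitioned into a $p$-by-$m$ grid of equal-size blocks and each $B^{(\ell)}$ into a $p$-by-$n$ grid of equal-size blocks. There are $N$ workers. The master sends worker $i$ a (possibly random) query $Q_i$ depending on $D$; worker $i$ encodes $\boldsymbol{A}$ into $\tilde A_i\in\mathbb{F}^{\frac{s}{p}\times\frac{t}{m}}$ and $\boldsymbol{B}$ into $\tilde B_i\in\mathbb{F}^{\frac{s}{p}\times\frac{r}{n}}$, each a linear combination of the respective blocks with coefficients determined by $Q_i$, computes $\tilde A_i^\intercal\tilde B_i$ and returns it. The master decodes by linear combinations of the received results (coefficients may depend on $D$ and the queries). A scheme achieves recovery threshold $K$ if the master can recover ${A^{(D)}}^\intercal B^{(D)}$ from the results of any subset of $K$ workers. Privacy requirement: $I(D;Q_i,\boldsymbol{A},\boldsymbol{B})=0$ for every $i\in[N]$, where $\boldsymbol{A},\boldsymbol{B},D$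 are uniformly random. $R(p,m,n)$ denotes the bilinear complexity (tensor rank of the matrix multiplication tensor) of multiplying an $m$-by-$p$ matrix by a $p$-by-$n$ matrix. *)

(* Defs.v *)
From HB Require Import structures.
From mathcomp Require Import all_boot all_order all_algebra all_field.
Set Implicit Arguments. Unset Strict Implicit. Unset Printing Implicit Defensive.
Import GRing.Theory.
Local Open Scope ring_scope.

Section FPCMM.
Variable F : finFieldType.

(* A bilinear algorithm of rank r for multiplying an m-by-p matrix X by a
   p-by-n matrix Y: linear forms u_k(X) = sum_{i,j} al k i j * X i j,
   v_k(Y) = sum_{j,l} be k j l * Y j l and matrices w_k with
   X *m Y = sum_{k<r} u_k(X) v_k(Y) w_k  (a rank-r decomposition of the
   matrix multiplication tensor). *)
Definition has_bilinear_algo (p m n r : nat) : Prop :=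
  exists (al : 'I_r -> 'M[F]_(m, p)) (be : 'I_r -> 'M[F]_(p, n))
         (w : 'I_r -> 'M[F]_(m, n)),
    forall (X : 'M[F]_(m, p)) (Y : 'M[F]_(p, n)),
      X *m Y = \sum_(k < r)
        ((\sum_(i < m) \sum_(j < p) al k i j * X i j) *
         (\sum_(j < p) \sum_(l < n) be k j l * Y j l)) *: w k.

Definition is_bilinear_complexity (p m n R : nat) : Prop :=
  has_bilinear_algo p m n R /\ forall r, has_bilinear_algo p m n r -> (R <= r)%N.

(* Block (u, j) of a (p*a)-by-(m*b) matrix partitioned into a p-by-m grid of
   a-by-b blocks; row index u*a + x, column index j*b + y. *)
Definition blk (p m a b : nat) (A : 'M[F]_(p * a, m * b)) (u : 'I_p) (j : 'I_m)
  : 'M[F]_(a, b) :=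
  \matrix_(x < a, y < b) A (mxvec_index u x) (mxvec_index j y).

Definition Alist (M p m a b : nat) := {ffun 'I_M -> 'M[F]_(p * a, m * b)}.

(* A query sent to a worker: the encoding coefficients of every block of every
   A^(l) and every B^(l). *)
Definition query (M p m n : nat) :=
  ({ffun 'I_M -> 'M[F]_(p, m)} * {ffun 'I_M -> 'M[F]_(p, n)})%type.

Definition encA (M p m n a b : nat) (q : query M p m n) (A : Alist M p m a b)
  : 'M[F]_(a, b) :=
  \sum_(l < M) \sum_(u < p) \sum_(j < m) q.1 l u j *: blk (A l) u j.

Definition encB (M p m n a c : nat) (q : query M p m n) (B : Alist M p n a c)
  : 'M[F]_(a, c) :=
  \sum_(l < M) \sum_(u < p) \sum_(k < n) q.2 l u k *: blk (B l) u k.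

Definition worker_result (M p m n a b c : nat) (q : query M p m n)
  (A : Alist M p m a b) (B : Alist M p n a c) : 'M[F]_(b, c) :=
  (encA q A)^T *m encB q B.

(* Master's private randomness omega drawn uniformly from a finite nonempty
   type Omega; queries Q D omega i for the desired index D and worker i. *)
Record scheme (M N p m n : nat) := Scheme {
  Omega : finType;
  Omega_nonempty : (0 < #|Omega|)%N;
  Q : 'I_M -> Omega -> 'I_N -> query M p m n
}.

Arguments Q {M N p m n} s.

(* Sample space: D uniform in [M], omega uniform, A and B uniform and all
   independent; uniform measure on the finite product. *)
Definition sample (M N p m n a b c : nat) (S : scheme M N p m n) :=
  ('I_M * Omega S * (Alist M p m a b * Alist M p n a c))%type.

(* Privacy: I(D ; Q_i, A, B) = 0, i.e. D is statistically independent of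
   (Q_i, A, B) under the uniform product measure. *)
Definition private (M N p m n a b c : nat) (S : scheme M N p m n) : Prop :=
  forall (i : 'I_N) (d : 'I_M)
         (y : (query M p m n * (Alist M p m a b * Alist M p n a c))%type),
    let Dv := fun x : sample a b c S => x.1.1 in
    let Yv := fun x : sample a b c S => (Q S x.1.1 x.1.2 i, x.2) in
    (#|[set x : sample a b c S | (Dv x == d) && (Yv x == y)]|
       * #|[set: sample a b c S]|)%N
    = (#|[set x : sample a b c S | Dv x == d]|
       * #|[set x : sample a b c S | Yv x == y]|)%N.

(* Recovery threshold K: for every D, every realisation of the randomness and
   every set W of K workers, the master can recover A^(D)^T B^(D) blockwise as
   a linear combination of the results of the workers in W, with coefficients
   depending only on D and the queries (not on A, B). *)
Definition recovers (M N p m n a b c K : nat) (S : scheme M N p m n) : Prop :=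
  forall (d : 'I_M) (om : Omega S) (W : {set 'I_N}), #|W| = K ->
    exists coef : 'I_m -> 'I_n -> 'I_N -> F,
      forall (A : Alist M p m a b) (B : Alist M p n a c) (j : 'I_m) (k : 'I_n),
        blk ((A d)^T *m B d) j k
        = \sum_(i in W) coef j k i *: worker_result (Q S d om i) A B.

End FPCMM.

(* Main.v *)
Require Import Defs.
From HB Require Import structures.
From mathcomp Require Import all_boot all_order all_algebra all_field.
From mathcomp Require Import ring lra zify.
Set Implicit Arguments. Unset Strict Implicit. Unset Printing Implicit Defensive.
Import GRing.Theory.
Local Open Scope ring_scope.


Section Interp.
Variables (K : fieldType) (N : nat) (x : 'I_N -> K).
Hypothesis xinj : injective x.
Variable W : {set 'I_N}.

Definition lq (i : 'I_N) : {poly K} := \prod_(j <- rem i (enum W)) ('X - (x j)%:P).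
Definition lb (i : 'I_N) : {poly K} := ((lq i).[x i])^-1 *: lq i.

Lemma size_lq i : i \in W -> size (lq i) = #|W|.
Proof.
move=> iW; rewrite /lq size_prod_XsubC size_rem ?mem_enum // -cardE.
have : (0 < #|W|)%N by apply/card_gt0P; exists i.
by case: #|W|.
Qed.

Lemma lq_xi_neq0 i : (lq i).[x i] != 0.
Proof.
rewrite /lq horner_prod prodf_seq_neq0; apply/allP => j.
rewrite mem_rem_uniq ?enum_uniq // inE => /andP[ji _] /=.
by rewrite hornerXsubC subr_eq0 (inj_eq xinj) eq_sym.
Qed.

Lemma lb_x i k : k \in W -> (lb i).[x k] = (i == k)%:R.
Proof.
move=> kW; rewrite /lb hornerZ; have [<-|ik] := eqVneq i k.
  by rewrite mulVf // lq_xi_neq0.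
rewrite /lq [X in _ * X]horner_prod [X in _ * X](bigD1_seq k) ?rem_uniq ?enum_uniq //=; last first.
  by rewrite mem_rem_uniq ?enum_uniq // inE eq_sym ik mem_enum.
by rewrite hornerXsubC subrr mul0r mulr0.
Qed.

Lemma size_lb i : i \in W -> (size (lb i) <= #|W|)%N.
Proof. by move=> iW; rewrite (leq_trans (size_scale_leq _ _)) // size_lq. Qed.

Lemma interp (g : {poly K}) : (size g <= #|W|)%N ->
  forall y, g.[y] = \sum_(i in W) g.[x i] * (lb i).[y].
Proof.
move=> sg y; set G := \sum_(i in W) g.[x i] *: lb i.
suff gG : g = G by rewrite {1}gG horner_sum; apply: eq_bigr => i _; rewrite hornerZ.
apply/eqP; rewrite -subr_eq0; apply/eqP.
apply: (@roots_geq_poly_eq0 _ _ [seq x i | i <- enum W]).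
- apply/allP => _ /mapP[k kW ->]; rewrite mem_enum in kW.
  rewrite /root hornerD hornerN horner_sum (bigD1 k) //= big1 => [|i /andP[iW ik]].
    by rewrite hornerZ lb_x // eqxx mulr1 addr0 subrr.
  by rewrite hornerZ lb_x // (negPf ik) mulr0.
- by rewrite map_inj_uniq ?enum_uniq.
- rewrite size_map -cardE (leq_trans (size_polyD _ _)) // geq_max sg size_polyN.
  rewrite /G; apply: (big_ind (fun q : {poly K} => size q <= #|W|)%N) => //.
  + by rewrite size_poly0.
  + by move=> p1 p2 h1 h2; rewrite (leq_trans (size_polyD _ _)) // geq_max h1 h2.
  + by move=> i iW; rewrite (leq_trans (size_scale_leq _ _)) // size_lb.
Qed.
End Interp.


Lemma priv_count (D O X : finType) (g : D -> O -> O) :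
  (forall d, injective (g d)) -> forall d (y : O * X),
  (#|[set x : D * O * X | (x.1.1 == d) && ((g x.1.1 x.1.2, x.2) == y)]|
     * #|[set: D * O * X]|)%N
  = (#|[set x : D * O * X | x.1.1 == d]|
     * #|[set x : D * O * X | (g x.1.1 x.1.2, x.2) == y]|)%N.
Proof.
move=> ginj d [o z].
pose h e := invF (ginj e) o.
have -> : [set x : D * O * X | (x.1.1 == d) && ((g x.1.1 x.1.2, x.2) == (o, z))]
   = [set (d, h d, z)].
  apply/setP => [[[e w] u]]; rewrite !inE /= !xpair_eqE.
  have [->|] //= := eqVneq e d.
  congr (_ && _); apply/eqP/eqP => [H|->].
    by rewrite /h -H invF_f.
  by rewrite /h f_invF.
have -> : [set x : D * O * X | x.1.1 == d] = setX (setX [set d] setT) setT.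
  apply/setP => [[[e w] u]]; by rewrite !inE /= !andbT.
have -> : [set x : D * O * X | (g x.1.1 x.1.2, x.2) == (o, z)]
   = setX [set (e, h e) | e in D] [set z].
  apply/setP => [[[e w] u]]; rewrite !inE /= xpair_eqE.
  congr (_ && _); apply/eqP/imsetP => [H|[e' _ [-> ->]]].
    by exists e => //; rewrite /h -H invF_f.
  by rewrite /h f_invF.
rewrite cards1 !cardsX cardsT !card_prod cards1 cardsT card_imset ?cardsT.
  by rewrite cards1; ring.
by move=> e1 e2 [].
Qed.


Lemma blk_trmul (F : finFieldType) p m n a b c (A : 'M[F]_(p*a, m*b))
  (B : 'M[F]_(p*a, n*c)) j k :
  blk (A^T *m B) j k = \sum_(u < p) (blk A u j)^T *m blk B u k.
Proof.
apply/matrixP => s t; rewrite !mxE summxE.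
rewrite (reindex (uncurry (@mxvec_index p a)) (curry_mxvec_bij p a)) /=.
under [RHS]eq_bigr do rewrite !mxE.
rewrite pair_bigA /=; apply: eq_bigr => [[u v]] _ /=; rewrite !mxE //.
Qed.

Definition Ahat (F : finFieldType) p m a b r (al : 'I_r -> 'M[F]_(m,p))
  (A : 'M[F]_(p*a, m*b)) (q : 'I_r) : 'M[F]_(a, b) :=
  \sum_(i < m) \sum_(u < p) al q i u *: blk A u i.
Definition Bhat (F : finFieldType) p n a c r (be : 'I_r -> 'M[F]_(p,n))
  (B : 'M[F]_(p*a, n*c)) (q : 'I_r) : 'M[F]_(a, c) :=
  \sum_(u < p) \sum_(l < n) be q u l *: blk B u l.

Lemma bil_block (F : finFieldType) p m n a b c r (al : 'I_r -> 'M[F]_(m,p))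
  (be : 'I_r -> 'M[F]_(p,n)) (w : 'I_r -> 'M[F]_(m,n)) :
  (forall (X : 'M[F]_(m, p)) (Y : 'M[F]_(p, n)),
      X *m Y = \sum_(k < r)
        ((\sum_(i < m) \sum_(j < p) al k i j * X i j) *
         (\sum_(j < p) \sum_(l < n) be k j l * Y j l)) *: w k) ->
  forall (A : 'M[F]_(p*a, m*b)) (B : 'M[F]_(p*a, n*c)) j k,
  blk (A^T *m B) j k = \sum_(q < r) w q j k *: ((Ahat al A q)^T *m Bhat be B q).
Proof.
move=> hA A B j k; rewrite blk_trmul; apply/matrixP => s t.
rewrite !summxE.
under eq_bigr do rewrite !mxE.
rewrite exchange_big /=.
under [RHS]eq_bigr do rewrite !mxE big_distrr /=.
rewrite [RHS]exchange_big /=; apply: eq_bigr => v _.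
pose Xm := \matrix_(i < m, u < p) blk A u i v s.
pose Ym := \matrix_(u < p, l < n) blk B u l v t.
have := congr1 (fun M : 'M[F]_(m,n) => M j k) (hA Xm Ym).
rewrite !mxE summxE => H.
transitivity (\sum_(u < p) Xm j u * Ym u k).
  by apply: eq_bigr => u _; rewrite !mxE.
rewrite H; apply: eq_bigr => q _; rewrite !mxE mulrC; congr (_ * (_ * _)).
- rewrite /Ahat !summxE; apply: eq_bigr => i _; rewrite !summxE; apply: eq_bigr => u _; rewrite !mxE //.
- rewrite /Bhat !summxE; apply: eq_bigr => u _; rewrite !summxE; apply: eq_bigr => l _; rewrite !mxE //.
Qed.


Lemma sum_delta2 (F : finFieldType) m p (f : 'I_m -> 'I_p -> F) i0 j0 :
  \sum_(i < m) \sum_(j < p) f i j * (delta_mx i0 j0 : 'M[F]_(m,p)) i j = f i0 j0.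
Proof.
rewrite (bigD1 i0) //= [X in _ + X]big1 => [|i ni]; last first.
  by rewrite big1 // => j _; rewrite mxE (negPf ni) mulr0.
rewrite addr0 (bigD1 j0) //= [X in _ + X]big1 => [|j nj]; last first.
  by rewrite mxE eqxx (negPf nj) mulr0.
by rewrite mxE !eqxx mulr1 !addr0.
Qed.

Lemma sum_delta2l (F : finFieldType) m p (f : 'I_m -> 'I_p -> F) i0 j0 :
  \sum_(i < m) \sum_(j < p) (delta_mx i0 j0 : 'M[F]_(m,p)) i j * f i j = f i0 j0.
Proof.
rewrite -(sum_delta2 f i0 j0); apply: eq_bigr => i _; apply: eq_bigr => j _.
by rewrite mulrC.
Qed.

Lemma trivial_algo (F : finFieldType) p m n :
  has_bilinear_algo F p m n #|{: 'I_m * 'I_p * 'I_n}|.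
Proof.
pose T := ('I_m * 'I_p * 'I_n)%type.
exists (fun k => delta_mx (enum_val k : T).1.1 (enum_val k : T).1.2).
exists (fun k => delta_mx (enum_val k : T).1.2 (enum_val k : T).2).
exists (fun k => delta_mx (enum_val k : T).1.1 (enum_val k : T).2).
move=> X Y.
under eq_bigr do rewrite !sum_delta2l.
rewrite (reindex (@enum_rank T)) /=; last first.
  by exists enum_val => t _; rewrite ?enum_rankK ?enum_valK.
under eq_bigr do rewrite enum_rankK.
apply/matrixP => i l; rewrite !mxE summxE.
rewrite -(pair_bigA _ (fun ij l' => ((X ij.1 ij.2 * Y ij.2 l') *: (delta_mx ij.1 l' : 'M[F]_(m,n))) i l)) /=.
transitivity (\sum_(i' < m) \sum_(j < p) \sum_(l' < n)
   ((X i' j * Y j l') *: (delta_mx i' l' : 'M[F]_(m,n))) i l); last by rewrite pair_bigA.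
rewrite (bigD1 i) //= [X in _ + X]big1 => [|i' ni]; last first.
  by rewrite big1 // => j _; rewrite big1 // => l' _; rewrite !mxE eq_sym (negPf ni) /= mulr0.
rewrite addr0; apply: eq_bigr => j _.
rewrite (bigD1 l) //= [X in _ + X]big1 => [|l' nl]; last first.
  by rewrite !mxE eqxx eq_sym (negPf nl) /= mulr0.
by rewrite !mxE !eqxx mulr1 addr0.
Qed.


Section Constr.
Variables (F : finFieldType) (M N p m n R : nat).
Variables (al : 'I_R -> 'M[F]_(m,p)) (be : 'I_R -> 'M[F]_(p,n)).
Variables (xs : 'I_N -> F) (bs : 'I_R -> F).
Hypothesis bs_inj : injective bs.

Definition Pp : {poly F} := \prod_(r < R) ('X - (bs r)%:P).
Definition Lq (r : 'I_R) : {poly F} := \prod_(r' < R | r' != r) ('X - (bs r')%:P).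
Definition Lp (r : 'I_R) : {poly F} := ((Lq r).[bs r])^-1 *: Lq r.

Lemma size_Pp : size Pp = R.+1.
Proof.
rewrite /Pp size_prod_XsubC; congr _.+1.
by rewrite [index_enum _]unlock -enumT size_enum_ord.
Qed.

Lemma size_Lq r : (size (Lq r) <= R)%N.
Proof.
rewrite /Lq size_prod => [|r' _]; last by rewrite polyXsubC_eq0.
rewrite (eq_bigr (fun _ => 2%N)) => [|r' _]; last by rewrite size_XsubC.
rewrite sum_nat_const.
have -> : #|[pred r' : 'I_R | r' != r]| = R.-1 by rewrite cardC1 card_ord.
by case: R r => [[]//|R' r] /=; lia.
Qed.

Lemma size_Lp r : (size (Lp r) <= R)%N.
Proof. by rewrite (leq_trans (size_scale_leq _ _)) // size_Lq. Qed.

Lemma Pp_bs s : Pp.[bs s] = 0.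
Proof.
by rewrite /Pp horner_prod (bigD1 s) //= hornerXsubC subrr mul0r.
Qed.

Lemma Pp_neq0 y : (forall r, y != bs r) -> Pp.[y] != 0.
Proof.
move=> h; rewrite /Pp horner_prod; apply/prodf_neq0 => r _.
by rewrite hornerXsubC subr_eq0 h.
Qed.

Lemma Lq_bs_neq0 r : (Lq r).[bs r] != 0.
Proof.
rewrite /Lq horner_prod; apply/prodf_neq0 => r' rr.
by rewrite hornerXsubC subr_eq0 (inj_eq bs_inj) eq_sym.
Qed.

Lemma Lp_bs r s : (Lp r).[bs s] = (r == s)%:R.
Proof.
rewrite /Lp hornerZ; have [<-|rs] := eqVneq r s.
  by rewrite mulVf // Lq_bs_neq0.
rewrite /Lq [X in _ * X]horner_prod [X in _ * X](bigD1 s) 1?eq_sym //=.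
by rewrite hornerXsubC subrr mul0r mulr0.
Qed.


Definition GA (y : F) : 'M[F]_(p,m) := \sum_(r < R) (Lp r).[y] *: (al r)^T.
Definition GB (y : F) : 'M[F]_(p,n) := \sum_(r < R) (Lp r).[y] *: be r.

Definition Qf (d : 'I_M) (om : query F M p m n) (i : 'I_N) : query F M p m n :=
  ([ffun l => Pp.[xs i] *: om.1 l + (l == d)%:R *: GA (xs i)],
   [ffun l => Pp.[xs i] *: om.2 l + (l == d)%:R *: GB (xs i)]).

Lemma Qf_inj d i : Pp.[xs i] != 0 -> injective (fun om => Qf d om i).
Proof.
move=> h [o1 o2] [o1' o2'] [e1 e2]; congr (_, _); apply/ffunP => l.
  have := congr1 (fun f : {ffun _ -> _} => Pp.[xs i]^-1 *: (f l - (l == d)%:R *: GA (xs i))) e1.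
  by rewrite /= !ffunE !addrK !scalerA mulVf // !scale1r.
have := congr1 (fun f : {ffun _ -> _} => Pp.[xs i]^-1 *: (f l - (l == d)%:R *: GB (xs i))) e2.
by rewrite /= !ffunE !addrK !scalerA mulVf // !scale1r.
Qed.

End Constr.

Lemma enc_split (F : finFieldType) M p m a b (o : {ffun 'I_M -> 'M[F]_(p,m)})
  (G : 'M[F]_(p,m)) (c : F) d (A : 'I_M -> 'M[F]_(p*a, m*b)) :
  \sum_(l < M) \sum_(u < p) \sum_(j < m)
     [ffun l => c *: o l + (l == d)%:R *: G] l u j *: blk (A l) u j
  = c *: (\sum_(l < M) \sum_(u < p) \sum_(j < m) o l u j *: blk (A l) u j)
    + \sum_(u < p) \sum_(j < m) G u j *: blk (A d) u j.
Proof.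
transitivity (\sum_(l < M) \sum_(u < p) \sum_(j < m)
   ((c * o l u j) *: blk (A l) u j + ((l == d)%:R * G u j) *: blk (A l) u j)).
  apply: eq_bigr => l _; apply: eq_bigr => u _; apply: eq_bigr => j _.
  by rewrite ffunE !mxE scalerDl.
under eq_bigr do under eq_bigr do rewrite big_split.
under eq_bigr do rewrite big_split.
rewrite big_split /=; congr (_ + _).
  rewrite scaler_sumr; apply: eq_bigr => l _; rewrite scaler_sumr.
  apply: eq_bigr => u _; rewrite scaler_sumr; apply: eq_bigr => j _.
  by rewrite scalerA.
rewrite (bigD1 d) //= [X in _ + X]big1 => [|l ld].
  rewrite addr0; apply: eq_bigr => u _; apply: eq_bigr => j _.
  by rewrite eqxx mul1r.
rewrite big1 // => u _; rewrite big1 // => j _.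
by rewrite (negPf ld) mul0r scale0r.
Qed.

Lemma hatA (F : finFieldType) p m a b r (al : 'I_r -> 'M[F]_(m,p)) (cf : 'I_r -> F)
  (A : 'M[F]_(p*a, m*b)) :
  \sum_(u < p) \sum_(j < m) (\sum_(q < r) cf q *: (al q)^T) u j *: blk A u j
  = \sum_(q < r) cf q *: Ahat al A q.
Proof.
transitivity (\sum_(u < p) \sum_(j < m) \sum_(q < r) (cf q * al q j u) *: blk A u j).
  apply: eq_bigr => u _; apply: eq_bigr => j _.
  by rewrite summxE scaler_suml; apply: eq_bigr => q _; rewrite !mxE.
under eq_bigr do rewrite exchange_big /=.
rewrite exchange_big /=; apply: eq_bigr => q _.
rewrite /Ahat scaler_sumr exchange_big /=; apply: eq_bigr => u _.
rewrite scaler_sumr; apply: eq_bigr => j _; by rewrite scalerA.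
Qed.

Lemma hatB (F : finFieldType) p n a c r (be : 'I_r -> 'M[F]_(p,n)) (cf : 'I_r -> F)
  (B : 'M[F]_(p*a, n*c)) :
  \sum_(u < p) \sum_(k < n) (\sum_(q < r) cf q *: be q) u k *: blk B u k
  = \sum_(q < r) cf q *: Bhat be B q.
Proof.
transitivity (\sum_(u < p) \sum_(k < n) \sum_(q < r) (cf q * be q u k) *: blk B u k).
  apply: eq_bigr => u _; apply: eq_bigr => k _.
  by rewrite summxE scaler_suml; apply: eq_bigr => q _; rewrite !mxE.
under eq_bigr do rewrite exchange_big /=.
rewrite exchange_big /=; apply: eq_bigr => q _.
rewrite /Bhat scaler_sumr; apply: eq_bigr => u _.
rewrite scaler_sumr; apply: eq_bigr => k _; by rewrite scalerA.
Qed.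

Lemma size_fac (F : finFieldType) R (P : {poly F}) (L : 'I_R -> {poly F})
  (sP : (size P <= R.+1)%N) (sL : forall r, (size (L r) <= R)%N) (c : F) (cr : 'I_R -> F) :
  (size (P * c%:P + \sum_(r < R) L r * (cr r)%:P)%R <= R.+1)%N.
Proof.
rewrite (leq_trans (size_polyD _ _)) // geq_max; apply/andP; split.
  rewrite (leq_trans (size_polyMleq _ _)) //.
  have := size_polyC_leq1 c; lia.
apply: (big_ind (fun q : {poly F} => size q <= R.+1)%N) => //.
- by rewrite size_poly0.
- by move=> p1 p2 h1 h2; rewrite (leq_trans (size_polyD _ _)) // geq_max h1 h2.
- move=> r _; rewrite (leq_trans (size_polyMleq _ _)) //.
  have := size_polyC_leq1 (cr r); have := sL r; lia.
Qed.

Lemma mat_interp (F : finFieldType) N R a b c (xs : 'I_N -> F) (xinj : injective xs)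
  (W : {set 'I_N}) (hW : #|W| = (2 * R + 1)%N) (P : {poly F}) (L : 'I_R -> {poly F})
  (sP : (size P <= R.+1)%N) (sL : forall r, (size (L r) <= R)%N)
  (EA : 'M[F]_(a,b)) (EB : 'M[F]_(a,c)) (Ah : 'I_R -> 'M[F]_(a,b)) (Bh : 'I_R -> 'M[F]_(a,c)) y :
  (P.[y] *: EA + \sum_(r < R) (L r).[y] *: Ah r)^T *m (P.[y] *: EB + \sum_(r < R) (L r).[y] *: Bh r)
  = \sum_(i in W) (lb xs W i).[y] *:
     ((P.[xs i] *: EA + \sum_(r < R) (L r).[xs i] *: Ah r)^T *m (P.[xs i] *: EB + \sum_(r < R) (L r).[xs i] *: Bh r)).
Proof.
apply/matrixP => s t; rewrite summxE.
pose hp := \sum_(v < a) (P * (EA v s)%:P + \sum_(r < R) L r * (Ah r v s)%:P) *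
                        (P * (EB v t)%:P + \sum_(r < R) L r * (Bh r v t)%:P).
have ent : forall z, ((P.[z] *: EA + \sum_(r < R) (L r).[z] *: Ah r)^T *m
     (P.[z] *: EB + \sum_(r < R) (L r).[z] *: Bh r)) s t = hp.[z].
  move=> z; rewrite !mxE /hp horner_sum; apply: eq_bigr => v _.
  rewrite !mxE hornerM !hornerD !hornerM !hornerC !horner_sum !summxE.
  congr (_ * _); congr (_ + _); apply: eq_bigr => r _; by rewrite !mxE hornerM hornerC.
rewrite ent (interp xinj (W := W) (g := hp)).
  by apply: eq_bigr => i _; rewrite mxE ent mulrC.
rewrite hW /hp.
apply: (big_ind (fun q : {poly F} => size q <= 2 * R + 1)%N) => //.
- by rewrite size_poly0.
- by move=> p1 p2 h1 h2; rewrite (leq_trans (size_polyD _ _)) // geq_max h1 h2.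
- move=> v _; rewrite (leq_trans (size_polyMleq _ _)) //.
  have := size_fac sP sL (EA v s) (fun r => Ah r v s).
  have := size_fac sP sL (EB v t) (fun r => Bh r v t); lia.
Qed.

Unset Implicit Arguments.

Theorem theorem3 (p m n M N : nat) :
  (1 <= p)%N -> (1 <= m)%N -> (1 <= n)%N -> (1 < M)%N ->
  exists q0 : nat,
    forall (F : finFieldType), (q0 <= #|F|)%N ->
    forall R : nat, is_bilinear_complexity F p m n R ->
    forall a b c : nat,
      exists S : scheme F M N p m n,
        private a b c S /\ recovers a b c (2 * R + 1) S.
Proof.
move=> _ _ _ _; exists (N + m * p * n)%N => F hF R [[al [be [w hA]]] Rmin] a b c.
have RB : (R <= m * p * n)%N.
  by have := Rmin _ (trivial_algo F p m n); rewrite !card_prod !card_ord.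
pose e (k : nat) : F := nth 0 (enum F) k.
have e_inj : forall k1 k2, (k1 < N + R)%N -> (k2 < N + R)%N -> e k1 = e k2 -> k1 = k2.
  move=> k1 k2 h1 h2 /eqP; rewrite /e nth_uniq ?enum_uniq // -?cardE; [by move/eqP|apply: (leq_trans h1)|apply: (leq_trans h2)]; apply: leq_trans hF; by rewrite leq_add2l.
pose xs (i : 'I_N) := e i.
pose bs (r : 'I_R) := e (N + r)%N.
have xinj : injective xs.
  move=> i1 i2 /e_inj h; apply/val_inj; have := ltn_ord i1; have := ltn_ord i2.
  move=> l1 l2; apply: h; lia.
have bs_inj : injective bs.
  move=> r1 r2 /e_inj h; apply/val_inj; have := ltn_ord r1; have := ltn_ord r2.
  move=> l1 l2; move: (h ltac:(lia) ltac:(lia)) => /eqP; rewrite eqn_add2l => /eqP; exact.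
have xb : forall i r, xs i != bs r.
  move=> i r; apply/eqP => /e_inj h; have := ltn_ord i; have := ltn_ord r.
  move=> l1 l2; have := h ltac:(lia) ltac:(lia); lia.
have ne : (0 < #|{: ({ffun 'I_M -> 'M[F]_(p, m)} * {ffun 'I_M -> 'M[F]_(p, n)})%type}|)%N.
  by apply/card_gt0P; exists ([ffun=> 0], [ffun=> 0]).
exists (Scheme ne (Qf al be xs bs)); split.
  move=> i d y /=.
  apply: (priv_count (g := fun d om => Qf al be xs bs d om i)) => d'.
  by apply: Qf_inj; apply: Pp_neq0.
move=> d om W hW /=.
exists (fun j k i => \sum_(q < R) w q j k * (lb xs W i).[bs q]) => A B j k.
rewrite (bil_block hA).
pose EA := encA om A. pose EB := encB om B.
have key : forall i, worker_result (Qf al be xs bs d om i) A B =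
  ((Pp bs).[xs i] *: EA + \sum_(r < R) (Lp bs r).[xs i] *: Ahat al (A d) r)^T *m
  ((Pp bs).[xs i] *: EB + \sum_(r < R) (Lp bs r).[xs i] *: Bhat be (B d) r).
  move=> i; rewrite /worker_result /encA /encB /=.
  by rewrite !enc_split /GA /GB hatA hatB.
have atb : forall q, (Ahat al (A d) q)^T *m Bhat be (B d) q =
  ((Pp bs).[bs q] *: EA + \sum_(r < R) (Lp bs r).[bs q] *: Ahat al (A d) r)^T *m
  ((Pp bs).[bs q] *: EB + \sum_(r < R) (Lp bs r).[bs q] *: Bhat be (B d) r).
  move=> q; rewrite Pp_bs !scale0r !add0r.
  rewrite (bigD1 q) //= [X in _ + X]big1 => [|r rq]; last first.
    by rewrite Lp_bs // (negPf rq) scale0r.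
  rewrite [X in _ = _ *m X](bigD1 q) //= [X in _ = _ *m (_ + X)]big1 => [|r rq]; last first.
    by rewrite Lp_bs // (negPf rq) scale0r.
  by rewrite Lp_bs // eqxx !scale1r !addr0.
transitivity (\sum_(q < R) w q j k *: \sum_(i in W) (lb xs W i).[bs q] *:
   worker_result (Qf al be xs bs d om i) A B).
  apply: eq_bigr => q _; congr (_ *: _).
  rewrite (atb q) (mat_interp xinj hW (eq_leq (size_Pp bs)) (size_Lp bs)).
  by apply: eq_bigr => i _; rewrite key.
transitivity (\sum_(q < R) \sum_(i in W) (w q j k * (lb xs W i).[bs q]) *:
   worker_result (Qf al be xs bs d om i) A B).
  apply: eq_bigr => q _; rewrite scaler_sumr; apply: eq_bigr => i _; by rewrite scalerA.
rewrite exchange_big /=; apply: eq_bigr => i _; by rewrite scaler_suml.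
Qed.
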